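(* For all integers $n\ge k\ge 2$ and $r\ge 0$, \[ \mathsf{opt}_{\operatorname{bandit}}^{\operatorname{adap}}(n,k,r)\le k\log_k n + 2kr. \]
   Context: Prediction with expert advice: $\mathcal{Y}=\{1,\dots,k\}$, $\mathcal{X}=[k]^n$, experts $h_i(x)=x_i$, $i=1,\dots,n$. $\mathcal{P}_r$ is the set of finite sequences of examples in $\mathcal{X}\times\mathcal{Y}$ on which some $h_i$ errs on at most $r$ examples. Online learning with bandit feedback: each round the adversary presents $x_t$, the learner chooses a distribution $\pi^{(t)}$ on $\mathcal{Y}$ (depending on past observations and $x_t$) and draws $\hat y_t\sim\pi^{(t)}$, and observes only whether $\hat y_t=y_t$; a mistake is $\hat y_t\ne y_t$. An adaptive adversary chooses $x_t$ from the history, sees $\pi^{(t)}$, and chooses a distribution $\tau^{(t)}$ from which $y_t$ is drawn; it must ensure that whenever the history is realizable, each $y_t$ in the support of $\tau^{(t)}$ keeps it realizable, where a history of (instance, correct/incorrect, prediction) triples is realizable if some choice of true labels agreeing with the observations gives a sequence in $\mathcal{P}_r$. $\mathsf{opt}_{\operatorname{bandit}}^{\operatorname{adap}}(n,k,r)=\inf_{\text{learner}}\sup_{\text{adversary}}$ expected number of mistakes. *)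

(* Defs.v *)
From HB Require Import structures.
From mathcomp Require Import all_boot all_order all_algebra.
From mathcomp Require Import all_classical all_reals.
From mathcomp Require Import ereal exp.
Set Implicit Arguments. Unset Strict Implicit. Unset Printing Implicit Defensive.
Import Order.TTheory GRing.Theory Num.Theory.
Local Open Scope ring_scope.

Section BanditGame.
Variables (R : realType) (n k r : nat).

(* instance space X = [k]^n ; labels Y = 'I_k (i.e. {1..k} shifted to {0..k-1}) *)
Definition inst := {ffun 'I_n -> 'I_k}.
Definition expert (i : 'I_n) (x : inst) : 'I_k := x i.

Definition dist := {ffun 'I_k -> R}.
Definition is_dist (p : dist) : Prop := (forall y, 0 <= p y) /\ \sum_y p y = 1.

Definition in_Pr (z : seq (inst * 'I_k)) : Prop :=
  exists i : 'I_n, (count (fun e => expert i e.1 != e.2) z <= r)%N.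

(* learner's observation: (instance, correct?, prediction) *)
Definition obs := (inst * bool * 'I_k)%type.

Definition realizable (s : seq obs) : Prop :=
  exists ys : seq 'I_k,
    size ys = size s /\
    all2 (fun o y => o.1.2 == (o.2 == y)) s ys /\
    in_Pr (zip [seq o.1.1 | o <- s] ys).

Definition learner := seq obs -> inst -> dist.
Definition valid_learner (L : learner) : Prop :=
  forall s x, is_dist (L s x).

(* full history seen by the adaptive adversary: (x_t, pi_t, yhat_t, y_t) *)
Definition ahist := seq (inst * dist * 'I_k * 'I_k).
Definition obs_of (h : ahist) : seq obs :=
  [seq (e.1.1.1, e.1.2 == e.2, e.1.2) | e <- h].

(* adaptive adversary: chooses x_t from the history, then (after seeing
   pi_t) a distribution tau_t of y_t *)
Record adversary := Adversary {
  adv_x : ahist -> inst;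
  adv_tau : ahist -> inst -> dist -> dist }.

Definition valid_adversary (A : adversary) : Prop :=
  forall (h : ahist) (x : inst) (pi : dist), is_dist pi ->
    is_dist (adv_tau A h x pi) /\
    (realizable (obs_of h) ->
       forall y yhat : 'I_k, 0 < adv_tau A h x pi y -> 0 < pi yhat ->
         realizable (rcons (obs_of h) (x, yhat == y, yhat))).

Fixpoint exp_mistakes (L : learner) (A : adversary) (T : nat) (h : ahist) : R :=
  match T with
  | 0 => 0
  | T'.+1 =>
      let x := adv_x A h in
      let pi := L (obs_of h) x in
      let tau := adv_tau A h x pi in
      \sum_(yhat : 'I_k) \sum_(y : 'I_k)
         pi yhat * tau y *
         (((yhat != y) : nat)%:R + exp_mistakes L A T' (rcons h (x, pi, yhat, y)))
  end.

(* opt^adap_bandit(n,k,r) = inf_learner sup_adversary E[#mistakes]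
   (the game may last any finite number of rounds T) *)
Definition opt_bandit_adap : \bar R :=
  ereal_inf [set ereal_sup [set e | exists (A : adversary) (T : nat),
                                valid_adversary A /\ e = (exp_mistakes L A T [::])%:E]
            | L in valid_learner].

End BanditGame.

(* Main.v *)
Require Import Defs.
From HB Require Import structures.
From mathcomp Require Import all_boot all_order all_algebra.
From mathcomp Require Import all_classical all_reals.
From mathcomp Require Import ereal exp.
From mathcomp Require Import lra ring.
Import Order.TTheory GRing.Theory Num.Theory.
Local Open Scope ring_scope.

Lemma lnsub (R : realType) (a b : R) : 0 < a -> 0 < b -> ln a - ln b <= a / b - 1.
Proof.
move=> a0 b0.
rewrite -ln_div ?posrE //.
rewrite -{1}(subrK 1 (a / b)) addrC.
apply: le_ln1Dx.
have : 0 < a / b by apply: divr_gt0.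
lra.
Qed.

Section Step.
Variables (R : realType) (k : nat).
Hypothesis hk : (2 <= k)%N.

Definition LL : R := ln (k%:R).
Definition cc : R := k%:R / LL.
Definition bet : R := (k%:R ^+ 2)^-1.

Lemma k_gt1 : 1 < (k%:R : R).
Proof. by rewrite ltr1n. Qed.

Lemma LL_gt0 : 0 < LL.
Proof. exact: ln_gt0 k_gt1. Qed.

Lemma cc_gt0 : 0 < cc.
Proof. apply: divr_gt0 LL_gt0. exact: lt_trans k_gt1. Qed.

Lemma ccLL : cc * LL = k%:R.
Proof. rewrite /cc mulrVK //. apply: unitf_gt0 LL_gt0. Qed.

Lemma bet_gt0 : 0 < bet.
Proof. rewrite /bet invr_gt0 exprn_gt0 //. exact: lt_trans k_gt1. Qed.

Lemma kbet : k%:R * bet = (k%:R)^-1.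
Proof.
rewrite /bet expr2 invfM mulrA divff ?mul1r //.
by apply: lt0r_neq0; exact: lt_trans k_gt1.
Qed.

Lemma kbet_le1 : k%:R * bet <= 1.
Proof. rewrite kbet invf_le1 ?ltW //; [exact: k_gt1 | exact: lt_trans k_gt1]. Qed.

Lemma bet_le1 : bet <= 1.
Proof.
have := kbet_le1. have := bet_gt0. have := k_gt1. move=> h1 h2 h3. nra.
Qed.


Lemma ln_le_sub1 (x : R) : 0 < x -> ln x <= x - 1.
Proof.
move=> x0; rewrite -{1}(subrK 1 x) addrC; apply: le_ln1Dx; lra.
Qed.

Definition xx (p : 'I_k -> R) (yh y : 'I_k) : R :=
  if yh == y then bet + (1 - bet) * p y else 1 - (1 - bet) * p yh.

Lemma xx_gt0 p yh y : (forall j, 0 <= p j <= 1) -> 0 < xx p yh y.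
Proof.
move=> hp; have b0 := bet_gt0; have b1 := bet_le1.
rewrite /xx; case: eqP => _.
  have /andP[h1 h2] := hp y. nra.
have /andP[h1 h2] := hp yh. nra.
Qed.

Lemma step0 (p : 'I_k -> R) : (forall j, 0 <= p j <= 1) ->
  exists pi : {ffun 'I_k -> R}, ((forall y, 0 <= pi y) /\ \sum_y pi y = 1) /\
  forall y, \sum_yh pi yh * (((yh != y) : nat)%:R + cc * ln (xx p yh y)) <= 0.
Proof.
move=> hp; have b0 := bet_gt0; have b1 := bet_le1; have c0 := cc_gt0.
case: (pselect (exists j0, 1 <= cc * (1 - bet) * p j0)) => [[j0 hj0]|hno].
  exists [ffun j => (j == j0)%:R]; split.
    split; first by move=> y; rewrite ffunE ler0n.
    rewrite (bigD1 j0) //= big1 => [|j /negbTE hj]; last by rewrite ffunE hj.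
    by rewrite ffunE eqxx addr0.
  move=> y; rewrite (bigD1 j0) //= big1 => [|j /negbTE hj]; last by rewrite ffunE hj mul0r.
  rewrite ffunE eqxx mul1r addr0 /xx.
  have /andP[h1 h2] := hp j0.
  case: eqP => [<-|/eqP ne].
    rewrite /= add0r.
    have : ln (bet + (1 - bet) * p j0) <= 0 by apply: ln_le0; nra.
    nra.
  rewrite /=.
  have := ln_le_sub1 _ (xx_gt0 p j0 y hp); rewrite /xx (negbTE ne) => hl.
  nra.
have hlt j : cc * (1 - bet) * p j < 1.
  by rewrite ltNge; apply/negP => h; apply: hno; exists j.
pose A j := 1 - cc * (1 - bet) * p j.
pose V j := - (cc * ln (bet + (1 - bet) * p j)).
pose D j := A j + V j.
have A0 j : 0 < A j by rewrite /A; have := hlt j; lra.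
have kAD j : k%:R * A j <= D j.
  have /andP[h1 h2] := hp j.
  have q0 : 0 < bet + (1 - bet) * p j by nra.
  have kq0 : 0 < k%:R * (bet + (1 - bet) * p j).
    by apply: mulr_gt0 => //; exact: lt_trans k_gt1.
  have := ln_le_sub1 _ kq0; rewrite lnM ?posrE //; last exact: lt_trans k_gt1.
  rewrite -/LL => hl.
  have e1 : cc * LL = k%:R := ccLL.
  have e2 := kbet_le1.
  have hu := hlt j.
  rewrite /D /V /A.
  set u := cc * (1 - bet) * p j in hu *.
  set lq := ln (bet + (1 - bet) * p j) in hl *.
  have e3 : cc * (k%:R * (bet + (1 - bet) * p j)) = cc * (k%:R * bet) + k%:R * u.
    by rewrite /u; ring.
  have hk1 : 1 <= (k%:R : R) by exact: ltW k_gt1.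
  have hcl : cc * (LL + lq) <= cc * (k%:R * (bet + (1 - bet) * p j) - 1).
    by apply: ler_wpM2l => //; exact: ltW.
  have : cc * (k%:R * bet) <= cc by rewrite -[X in _ <= X]mulr1; apply: ler_wpM2l => //; exact: ltW.
  nra.
have D0 j : 0 < D j.
  have := kAD j; have := A0 j; have := k_gt1; nra.
pose Z := \sum_l (D l)^-1.
have Z0 : 0 < Z.
  rewrite /Z (bigD1 (Ordinal (leq_trans (isT : (0 < 2)%N) hk))) //=.
  apply: ltr_pwDl; first by rewrite invr_gt0.
  by apply: sumr_ge0 => i _; rewrite invr_ge0 ltW.
exists [ffun j => (D j)^-1 / Z]; split.
  split; first by move=> y; rewrite ffunE divr_ge0 // ?invr_ge0 ltW.
  under eq_bigr do rewrite ffunE.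
  by rewrite -mulr_suml divff // lt0r_neq0.
move=> y.
pose B yh := if yh == y then - V y else A yh.
apply: (@le_trans _ _ (\sum_yh [ffun j => (D j)^-1 / Z] yh * B yh)).
  apply: ler_sum => yh _; apply: ler_wpM2l.
    by rewrite ffunE divr_ge0 // ?invr_ge0 ltW.
  rewrite /B /xx; have [e|ne] := eqVneq yh y.
    by subst yh; rewrite /= add0r /V opprK.
  rewrite /=.
  have := ln_le_sub1 _ (xx_gt0 p yh y hp); rewrite /xx (negbTE ne) => hl.
  rewrite /A; nra.
have eB : \sum_yh [ffun j => (D j)^-1 / Z] yh * B yh =
    \sum_yh [ffun j => (D j)^-1 / Z] yh * A yh - (D y)^-1 / Z * D y.
  rewrite (bigD1 y) //= [X in _ = X - _](bigD1 y) //= /B eqxx.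
  rewrite (eq_bigr (fun yh => [ffun j => (D j)^-1 / Z] yh * A yh)); last first.
    by move=> i /negbTE ->.
  rewrite ffunE /D; ring.
have eD : (D y)^-1 / Z * D y = Z^-1 by rewrite mulrAC mulVf ?mul1r // lt0r_neq0.
rewrite eB eD.
rewrite subr_le0.
apply: (@le_trans _ _ (\sum_(yh < k) (k%:R)^-1 / Z)).
  apply: ler_sum => j _; rewrite ffunE mulrAC.
  apply: ler_wpM2r; first by rewrite invr_ge0 ltW.
  rewrite mulrC ler_pdivrMr //.
  have kn0 : (k%:R : R) != 0 by rewrite lt0r_neq0 // (lt_trans _ k_gt1).
  apply: (@le_trans _ _ (k%:R^-1 * (k%:R * A j))); first by rewrite mulrA mulVf ?mul1r.
  apply: ler_wpM2l; last exact: kAD.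
  by rewrite invr_ge0 ltW // (lt_trans _ k_gt1).
rewrite sumr_const card_ord -mulrnAl -mulr_natr mulVf ?mul1r //.
by rewrite lt0r_neq0 // (lt_trans _ k_gt1).
Qed.

End Step.

Section Game.
Variables (R : realType) (n k r : nat).
Hypothesis hk : (2 <= k)%N.
Hypothesis hn : (0 < n)%N.

Definition errs (i : 'I_n) (o : obs n k) : bool :=
  if o.1.2 then o.1.1 i != o.2 else o.1.1 i == o.2.
Definition cnt i (s : seq (obs n k)) := count (errs i) s.
Definition wt (s : seq (obs n k)) i : R := (bet R k) ^+ cnt i s.
Definition Ws (s : seq (obs n k)) : R := \sum_i wt s i.
Definition Phi s : R := cc R k * ln (Ws s) + 2 * k%:R * r%:R.

Lemma wt_gt0 s i : 0 < wt s i.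
Proof. rewrite /wt exprn_gt0 //; exact: bet_gt0. Qed.

Lemma Ws_gt0 s : 0 < Ws s.
Proof.
rewrite /Ws (bigD1 (Ordinal hn)) //=; apply: ltr_pwDl; first exact: wt_gt0.
by apply: sumr_ge0 => i _; exact/ltW/wt_gt0.
Qed.

Lemma Ws_rcons s o :
  Ws (rcons s o) = Ws s - (1 - bet R k) * \sum_(i | errs i o) wt s i.
Proof.
have e i : wt (rcons s o) i = wt s i * (if errs i o then bet R k else 1).
  rewrite /wt /cnt -cats1 count_cat /= addn0 exprD.
  by case: (errs i o); rewrite ?expr1 ?expr0.
rewrite /Ws (eq_bigr _ (fun i _ => e i)).
rewrite (bigID (fun i => errs i o)) /= [X in _ = X - _](bigID (fun i => errs i o)) /=.
rewrite (eq_bigr (fun i => wt s i * bet R k)); last by move=> i ->.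
rewrite [X in X + _ = _](eq_bigr (fun i => wt s i * bet R k)) //.
rewrite [X in _ + X = _](eq_bigr (fun i => wt s i)); last by move=> i /negbTE ->; rewrite mulr1.
rewrite -mulr_suml; ring.
Qed.

Definition goodpi (s : seq (obs n k)) (x : inst n k) (pi : dist R k) :=
  is_dist pi /\ forall y : 'I_k, \sum_yh pi yh *
     (((yh != y) : nat)%:R + Phi (rcons s (x, yh == y, yh))) <= Phi s.

Lemma good_ex s x : exists pi, goodpi s x pi.
Proof.
pose Wv j := \sum_(i | x i == j) wt s i.
pose p j := Wv j / Ws s.
have W0 := Ws_gt0 s.
have Wvp j : Wv j = p j * Ws s by rewrite /p mulfVK // lt0r_neq0.
have hWv j : 0 <= Wv j <= Ws s.
  apply/andP; split; first by apply: sumr_ge0 => i _; exact/ltW/wt_gt0.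
  rewrite /Ws [X in _ <= X](bigID (fun i => x i == j)) /= lerDl.
  by apply: sumr_ge0 => i _; exact/ltW/wt_gt0.
have hp j : 0 <= p j <= 1.
  have /andP[h1 h2] := hWv j.
  by rewrite /p; apply/andP; split; [apply: divr_ge0 =>//; exact: ltW | rewrite ler_pdivrMr // mul1r].
have [pi [hd hpi]] := @step0 R k hk p hp.
exists pi; split => // y.
have eW yh : Ws (rcons s (x, yh == y, yh)) = Ws s * xx R k p yh y.
  rewrite Ws_rcons /xx /errs /=.
  have [e|ne] := eqVneq yh y.
    subst yh.
    have -> : \sum_(i | x i != y) wt s i = Ws s - Wv y.
      by rewrite /Ws [X in _ = X - _](bigID (fun i => x i == y)) /= -/(Wv y) addrAC subrr add0r.
    rewrite Wvp; ring.
  by rewrite -/(Wv yh) Wvp; ring.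
have eP yh : Phi (rcons s (x, yh == y, yh)) = Phi s + cc R k * ln (xx R k p yh y).
  rewrite /Phi eW lnM ?posrE //; last exact: (@xx_gt0 R k hk).
  ring.
under eq_bigr do rewrite eP.
have := hpi y.
have -> : \sum_yh pi yh * (((yh != y) : nat)%:R + (Phi s + cc R k * ln (xx R k p yh y))) =
   \sum_yh pi yh * (((yh != y) : nat)%:R + cc R k * ln (xx R k p yh y)) + (\sum_yh pi yh) * Phi s.
  rewrite mulr_suml -big_split /=; apply: eq_bigr => i _; ring.
case: hd => _ ->; lra.
Qed.

Definition Lrn : learner R n k := fun s x => proj1_sig (cid (good_ex s x)).

Lemma Lrn_good s x : goodpi s x (Lrn s x).
Proof. exact: (proj2_sig (cid (good_ex s x))). Qed.

Lemma Lrn_valid : valid_learner Lrn.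
Proof. by move=> s x; case: (Lrn_good s x). Qed.

Lemma real_cnt s : realizable r s -> exists i, (cnt i s <= r)%N.
Proof.
move=> [ys [hsz [hall [i hi]]]]; exists i; apply: leq_trans hi.
elim: s ys hsz hall => [|o s IH] [|y ys] //= [hsz] /andP[ho hall].
apply: leq_add; last exact: IH.
case: o ho => [[x b] yh] /= /eqP ->; rewrite /errs /expert /=.
have [e|ne] := eqVneq yh y; first by subst yh.
case: eqP => [->|] //=.
by rewrite ne.
Qed.

Lemma Phi_ge0 s : realizable r s -> 0 <= Phi s.
Proof.
move=> /real_cnt [i hi].
have b0 := @bet_gt0 R k hk; have b1 := @bet_le1 R k hk.
have h1 : bet R k ^+ r <= Ws s.
  apply: (@le_trans _ _ (wt s i)); first exact: ler_wiXn2l (ltW b0) b1 _ _ hi.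
  rewrite /Ws (bigD1 i) //= lerDl.
  by apply: sumr_ge0 => j _; exact/ltW/wt_gt0.
have h2 : ln (bet R k ^+ r) <= ln (Ws s).
  by rewrite ler_ln ?posrE ?exprn_gt0 //; exact: Ws_gt0.
have kp : 0 < (k%:R : R) by exact: lt_trans (k_gt1 R k hk).
have eb : ln (bet R k ^+ r) = - (2 * LL R k) * r%:R.
  rewrite lnXn // /bet lnV ?posrE ?exprn_gt0 // lnXn // -/(LL R k).
  by rewrite -mulNrn -mulr_natr mulr2n; ring.
have c0 := cc_gt0 R k hk.
have ce := ccLL R k hk.
rewrite /Phi.
have : cc R k * ln (bet R k ^+ r) <= cc R k * ln (Ws s) by apply: ler_wpM2l => //; exact: ltW.
rewrite eb.
have -> : cc R k * (- (2 * LL R k) * r%:R) = - (2 * (cc R k * LL R k) * r%:R) by ring.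
rewrite ce; lra.
Qed.


Lemma main_ind (A : adversary R n k) T : valid_adversary r A ->
  forall h, realizable r (obs_of h) -> exp_mistakes Lrn A T h <= Phi (obs_of h).
Proof.
move=> vA; elim: T => [|T IH] h hr /=; first exact: Phi_ge0.
set x := adv_x A h. set pi := Lrn (obs_of h) x. set tau := adv_tau A h x pi.
have [hpd hpi] := Lrn_good (obs_of h) x.
have [htd hreal] := vA h x pi hpd.
have eo yh y : obs_of (rcons h (x, pi, yh, y)) = rcons (obs_of h) (x, yh == y, yh).
  by rewrite /obs_of map_rcons.
have hp0 := hpd.1; have ht0 := htd.1.
apply: (@le_trans _ _ (\sum_yh \sum_y pi yh * tau y *
    (((yh != y) : nat)%:R + Phi (rcons (obs_of h) (x, yh == y, yh))))).
  apply: ler_sum => yh _; apply: ler_sum => y _.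
  have [p0|pp] := eqVneq (pi yh) 0; first by rewrite p0 !mul0r.
  have [t0|tp] := eqVneq (tau y) 0; first by rewrite t0 mulr0 !mul0r.
  apply: ler_wpM2l; first exact: mulr_ge0.
  rewrite lerD2l -eo; apply: IH; rewrite eo; apply: hreal => //.
    by rewrite lt0r tp ht0.
  by rewrite lt0r pp hp0.
rewrite exchange_big /=.
apply: (@le_trans _ _ (\sum_y tau y * Phi (obs_of h))).
  apply: ler_sum => y _.
  have -> : \sum_yh pi yh * tau y * (((yh != y) : nat)%:R + Phi (rcons (obs_of h) (x, yh == y, yh)))
     = tau y * \sum_yh pi yh * (((yh != y) : nat)%:R + Phi (rcons (obs_of h) (x, yh == y, yh))).
    by rewrite mulr_sumr; apply: eq_bigr => i _; ring.
  by apply: ler_wpM2l; [exact: ht0 | exact: hpi].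
by rewrite -mulr_suml htd.2 mul1r.
Qed.

Lemma real_nil : realizable r (@obs_of R n k [::]).
Proof. by exists [::]; split => //; split => //; exists (Ordinal hn). Qed.

Lemma Phi_nil : Phi [::] = k%:R * (ln (n%:R : R) / ln (k%:R : R)) + 2 * k%:R * r%:R.
Proof.
rewrite /Phi /Ws /wt /cnt /=.
under eq_bigr do rewrite expr0.
by rewrite sumr_const card_ord /cc /LL mulrAC -mulrA.
Qed.

End Game.

Theorem theorem4p7 (R : realType) (n k r : nat) :
  (2 <= k)%N -> (k <= n)%N ->
  (opt_bandit_adap R n k r <=
     ((k%:R * (ln (n%:R : R) / ln (k%:R : R)) + 2 * k%:R * r%:R)%:E))%E.
Proof.
move=> hk hkn.
have hn : (0 < n)%N by apply: leq_trans hkn; apply: leq_trans hk.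
rewrite /opt_bandit_adap.
apply: ge_ereal_inf.
exists (ereal_sup [set e | exists (A : adversary R n k) (T : nat),
   valid_adversary r A /\ e = (exp_mistakes (Lrn R n k r hk hn) A T [::])%:E]).
  by exists (Lrn R n k r hk hn) => //; exact: (Lrn_valid R n k r hk hn).
apply: ge_ereal_sup => e [A [T [vA ->]]].
rewrite lee_fin -(Phi_nil R n k r).
exact: (@main_ind R n k r hk hn A T vA [::] (real_nil R n k r hn)).
Qed.
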